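(* Let $R\in\mathbb{Z}[x]$ be a nonzero polynomial with $R=\prod_{i=1}^{\deg R} r_i^{\,i}$, where $r_i\in\mathbb{Z}[x]$ are square-free and pairwise coprime. Let $I=(a,b)\subset\mathbb{R}$ be an interval containing a root $\alpha$ of $r_{i_0}$, and put $m_I=(a+b)/2$, $r_I=(b-a)/2$. If $T^{(r_{i_0})'}_{3/2}(m_I,8r_I)$ holds and $T^{r_i}_1(m_I,8r_I)$ holds for all $i\neq i_0$, then the disc $\Delta_{2r_I}(m_I)=\{z\in\mathbb{C}:|z-m_I|<2r_I\}$ contains $\alpha$ and no other complex root of $R$, and for every $z\in\mathbb{C}$ with $|z-m_I|=2r_I$, $$|R(z)|>2^{-i_0-\deg R}\,|R(m_I-2r_I)|.$$
   Context: For $p\in\mathbb{R}[x]$ and reals $m,r,K$, the predicate $T^p_K(m,r)$ means $|p(m)|-K\sum_{k\ge1}\left|\frac{p^{(k)}(m)}{k!}\right|r^k>0$, where $p^{(k)}$ is the $k$-th derivative of $p$. *)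

(* Defs.v *)
From HB Require Import structures.
From mathcomp Require Import all_boot all_order all_algebra.
From mathcomp Require Import reals.
From mathcomp.real_closed Require Import complex.
Set Implicit Arguments. Unset Strict Implicit. Unset Printing Implicit Defensive.
Import Order.TTheory GRing.Theory Num.Theory.
Local Open Scope ring_scope.

(* Divisibility in the ring Z[x] (exact, not pseudo-division). *)
Definition zdvdp (q p : {poly int}) : Prop := exists s : {poly int}, p = s * q.

Definition zsquarefree (p : {poly int}) : Prop :=
  forall q : {poly int}, zdvdp (q * q) p -> q \is a GRing.unit.

Definition zcoprime (p1 p2 : {poly int}) : Prop :=
  forall q : {poly int}, zdvdp q p1 -> zdvdp q p2 -> q \is a GRing.unit.

Definition polyRi (R : realType) (p : {poly int}) : {poly R} :=
  map_poly (fun z : int => z%:~R) p.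

Definition polyCi (R : realType) (p : {poly int}) : {poly R[i]} :=
  map_poly (fun z : int => z%:~R) p.

(* The predicate T^p_K(m,r):
   |p(m)| - K * sum_{k>=1} |p^(k)(m)/k!| r^k > 0
   (the sum is finite: p^(k) = 0 for k >= size p). *)
Definition Tpred (R : realType) (p : {poly R}) (K m r : R) : Prop :=
  0 < `|p.[m]| - K * \sum_(1 <= k < size p) `|(p^`(k)).[m] / (k`!)%:R| * r ^+ k.

(* Main.v *)
Require Import Defs.
From HB Require Import structures.
From mathcomp Require Import all_boot all_order all_algebra.
From mathcomp Require Import reals.
From mathcomp.real_closed Require Import complex.
From mathcomp Require Import ring lra.
From mathcomp.real_closed Require polyorder.
Import Order.TTheory GRing.Theory Num.Theory.
Local Open Scope ring_scope.
Lemma taylor_est0 (F : numFieldType) (a : nat -> F) (k : nat) (h rho : F) :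
  `|h| <= rho ->
  `|\sum_(i < k.+1) a i * h ^+ i - a 0%N| <= \sum_(i < k) `|a i.+1| * rho ^+ i.+1.
Proof.
move=> hr.
rewrite big_ord_recl expr0 mulr1 [a 0%N + _]addrC addrK.

apply: le_trans (ler_norm_sum _ _ _) _.
apply: ler_sum => i _; rewrite normrM normrX.
apply: ler_wpM2l; first exact: normr_ge0.
by apply: lerXn2r; rewrite ?nnegrE ?normr_ge0 //; apply: le_trans hr.
Qed.

Lemma inner_bound (F : numFieldType) (w1 w2 rho : F) n :
  `|w1| <= rho -> `|w2| <= rho ->
  `|\sum_(j < n) w2 ^+ (n.-1 - j) * w1 ^+ j| <= n%:R * rho ^+ n.-1.
Proof.
move=> h1 h2.
have r0 : 0 <= rho by apply: le_trans h1.
apply: le_trans (ler_norm_sum _ _ _) _.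
have -> : n%:R * rho ^+ n.-1 = \sum_(j < n) rho ^+ (n.-1 - j) * rho ^+ j.
  rewrite (eq_bigr (fun _ => rho ^+ n.-1)); last first.
    move=> j _; rewrite -exprD subnK //.
    by case: n j => [[]|n] // j; rewrite /= -ltnS.
  by rewrite sumr_const card_ord mulr_natl.
apply: ler_sum => j _; rewrite normrM !normrX.
apply: ler_pM; rewrite ?exprn_ge0 ?normr_ge0 //; apply: lerXn2r;
  rewrite ?nnegrE ?normr_ge0 //.
Qed.

Lemma taylor_est1 (F : numFieldType) (a : nat -> F) (k : nat) (w1 w2 rho : F) :
  `|w1| <= rho -> `|w2| <= rho ->
  exists S, \sum_(i < k.+2) a i * w2 ^+ i - \sum_(i < k.+2) a i * w1 ^+ i
     = (w2 - w1) * S /\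
   `|S - a 1%N| <= \sum_(i < k) `|a i.+2| * (i.+2)%:R * rho ^+ i.+1.
Proof.
move=> h1 h2.
exists (\sum_(i < k.+2) a i * \sum_(j < i) w2 ^+ (i.-1 - j) * w1 ^+ j); split.
  rewrite -sumrB mulr_sumr; apply: eq_bigr => i _.
  by rewrite -mulrBr subrXX mulrCA.
rewrite 2!big_ord_recl big_ord0 mulr0 add0r big_ord1 /= expr0 mulr1 mulr1.
rewrite addrC addKr.
apply: le_trans (ler_norm_sum _ _ _) _.
apply: ler_sum => i _; rewrite normrM -mulrA.
apply: ler_wpM2l; first exact: normr_ge0.
exact: (@inner_bound F w1 w2 rho i.+2 h1 h2).
Qed.
Local Open Scope complex_scope.

Lemma prod_strict (R : realFieldType) (f g : nat -> R) (c : R) lo hi j :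
  (lo <= j < hi)%N -> 0 <= c ->
  (forall i, (lo <= i < hi)%N -> 0 <= f i) ->
  (forall i, (lo <= i < hi)%N -> i != j -> f i <= g i) ->
  (forall i, (lo <= i < hi)%N -> i != j -> 0 < g i) ->
  c * f j < g j ->
  c * \prod_(lo <= i < hi) f i < \prod_(lo <= i < hi) g i.
Proof.
move=> hj c0 hf0 hfg hg hj2.
have jin : j \in index_iota lo hi by rewrite mem_index_iota.
have uq : uniq (index_iota lo hi) by rewrite /index_iota iota_uniq.
rewrite (bigD1_seq j jin uq) (bigD1_seq j jin uq) /= mulrA.
have h1 : \prod_(i <- index_iota lo hi | i != j) f i <= \prod_(i <- index_iota lo hi | i != j) g i.
  rewrite big_seq_cond [X in _ <= X]big_seq_cond; apply: ler_prod => i /andP[].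
  rewrite mem_index_iota => hii ij; rewrite hf0 //=; exact: hfg.
have h2 : 0 < \prod_(i <- index_iota lo hi | i != j) g i.
  rewrite big_seq_cond; apply: prodr_gt0 => i /andP[].
  by rewrite mem_index_iota => hii ij; apply: hg.
have h3 : 0 <= c * f j by apply: mulr_ge0 => //; apply: hf0.
apply: le_lt_trans (ler_wpM2l h3 h1) _.
by rewrite ltr_pM2r.
Qed.

Section Bridge.
Variable R : realType.
Local Notation C := (R[i]).

Definition N (u : C) : R := complex.Re `|u|.

Lemma NE (u : C) : `|u| = (N u)%:C.
Proof. by rewrite /N RRe_real // normr_real. Qed.

Lemma N_ge0 u : 0 <= N u.
Proof. by rewrite -lecR rmorph0 -NE. Qed.

Lemma N_real (x : R) : N x%:C = `|x|.
Proof.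
apply: complexI; rewrite -NE normc_def /= expr0n /= addr0 sqrtr_sqr //.
Qed.

Lemma NM u v : N (u * v) = N u * N v.
Proof. by apply: complexI; rewrite rmorphM -!NE normrM. Qed.

Lemma NX u n : N (u ^+ n) = N u ^+ n.
Proof. by apply: complexI; rewrite rmorphXn -!NE normrX. Qed.

Lemma ND u v : N (u + v) <= N u + N v.
Proof. by rewrite -lecR rmorphD -!NE ler_normD. Qed.

Lemma NB u v : N u - N v <= N (u - v).
Proof. have := ND (u - v) v; rewrite subrK; lra. Qed.

Lemma NB2 u v : N u <= N (u - v) + N v.
Proof. have := ND (u - v) v; rewrite subrK; lra. Qed.

Lemma NB3 u v : N v <= N u + N (u - v).
Proof.
rewrite -lecR rmorphD -!NE.
have e : v = u - (u - v) by rewrite opprB addrC subrK.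
by rewrite {1}e ler_normB.
Qed.

Lemma N_le u (c : R) : `|u| <= c%:C -> N u <= c.
Proof. by rewrite NE lecR. Qed.

Lemma N_lt u (c : R) : `|u| < c%:C -> N u < c.
Proof. by rewrite NE ltcR. Qed.

Lemma N_eq0 u : N u = 0 -> u = 0.
Proof. by move=> h; apply/normr0_eq0; rewrite NE h. Qed.

Lemma polyCiE (p : {poly int}) : polyCi R p = map_poly (real_complex R) (polyRi R p).
Proof. rewrite /polyCi /polyRi -map_poly_comp; apply: eq_map_poly => z /=. by rewrite rmorph_int. Qed.

Lemma size_polyRi (p : {poly int}) : size (polyRi R p) = size p.
Proof. by rewrite size_map_inj_poly //; apply: intr_inj. Qed.

Lemma taylorC (p : {poly R}) (m : R) (u : C) :
  (map_poly (real_complex R) p).[u] =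
  \sum_(i < size p) (p^`N(i).[m])%:C * (u - m%:C) ^+ i.
Proof.
have hu : u = m%:C + (u - m%:C) by rewrite addrC subrK.
rewrite {1}hu nderiv_taylor; last exact: mulrC.
rewrite size_map_poly; apply: eq_bigr => i _.
by rewrite nderivn_map horner_map.
Qed.

Lemma Tpred_nd (p : {poly R}) K m rho :
  Tpred p K m rho ->
  0 < `|p.[m]| - K * \sum_(1 <= k < size p) `|p^`N(k).[m]| * rho ^+ k.
Proof.
rewrite /Tpred; congr (0 < _ - K * _); apply: eq_big_nat => k _.
rewrite nderivn_def hornerMn -mulr_natr mulfK // pnatr_eq0 -lt0n fact_gt0 //.
Qed.
Arguments Tpred_nd {p K m rho}.


Lemma normCR (x : R) : `|x%:C| = `|x|%:C.
Proof. by rewrite NE N_real. Qed.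

Lemma sum_pow_le (k : nat) (A : nat -> R) (r : R) : 0 < r ->
  (forall i, 0 <= A i) ->
  4 * \sum_(i < k) A i * (2 * r) ^+ i.+1 <= \sum_(i < k) A i * (8 * r) ^+ i.+1.
Proof.
move=> r0 hA; rewrite mulr_sumr; apply: ler_sum => i _.
have -> : 8 * r = 4 * (2 * r) by ring.
rewrite [(4 * _) ^+ _]exprMn.
have t0 : 0 <= (2 * r) ^+ i.+1 by apply: exprn_ge0; lra.
have f4 : 4 <= (4 : R) ^+ i.+1.
  by rewrite exprS ler_peMr // ?exprn_ege1 //; lra.
have := hA i; move: t0 f4; set t := (2 * r) ^+ i.+1; set q := (4 : R) ^+ i.+1.
move=> t0 f4 a0; have := mulr_ge0 a0 t0; nra.
Qed.

Lemma est0C (p : {poly R}) (m r : R) k (u : C) : size p = k.+1 ->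
  `|u - m%:C| <= (2 * r)%:C ->
  N ((map_poly (real_complex R) p).[u] - (p.[m])%:C) <=
  \sum_(i < k) `|p^`N(i.+1).[m]| * (2 * r) ^+ i.+1.
Proof.
move=> Hs hu; apply: N_le; rewrite (taylorC _ m) Hs.
have := @taylor_est0 _ (fun i => (p^`N(i).[m])%:C) k _ _ hu; rewrite /= nderivn0 => H.
apply: le_trans H _; rewrite rmorph_sum; rewrite le_eqVlt; apply/orP; left; apply/eqP/eq_bigr => i _.
by rewrite normCR -rmorphXn -rmorphM.
Qed.
Arguments est0C {p m r k u}.

Lemma factor_other (p : {poly R}) (m r : R) : 0 < r -> p != 0 -> Tpred p 1 m (8 * r) ->
  forall z w : C, `|z - m%:C| <= (2 * r)%:C -> `|w - m%:C| <= (2 * r)%:C ->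
  0 < N (map_poly (real_complex R) p).[z] /\
  (2^-1) ^+ (size p).-1 * N (map_poly (real_complex R) p).[w] <=
     N (map_poly (real_complex R) p).[z].
Proof.
move=> r0 p0 T z w hz hw.
have := Tpred_nd T.
case Hs: (size p) => [|k]; first by move/eqP: Hs; rewrite size_poly_eq0 (negbTE p0).
rewrite big_add1 /= big_mkord mul1r => T'.
have h4 := sum_pow_le k (fun i => `|p^`N(i.+1).[m]|) r r0 (fun i => normr_ge0 _).
have ez := est0C Hs hz; have ew := est0C Hs hw.
set E2 := \sum_(i < k) _ in h4 ez ew.
set E8 := \sum_(i < k) _ in h4 T'.
have E2ge : 0 <= E2 by apply: sumr_ge0 => i _; apply: mulr_ge0 => //; apply: exprn_ge0; lra.
have n1 := NB3 (map_poly (real_complex R) p).[z] (p.[m])%:C.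
have n2 := NB2 (map_poly (real_complex R) p).[w] (p.[m])%:C.
rewrite N_real in n1 n2.
have Nw0 := N_ge0 (map_poly (real_complex R) p).[w].
have t1 : `|p.[m]| - E2 <= N (map_poly (real_complex R) p).[z] by lra.
have t2 : E2 <= E8 / 4 by lra.
have t3 : E8 < `|p.[m]| by lra.
split; first lra.
rewrite /=.
case: (posnP k) => [k0|kpos].
  have e0 : E2 = 0 by rewrite /E2 k0 big_ord0.
  rewrite k0 expr0 mul1r; lra.
have hh : (2^-1 : R) ^+ k <= 2^-1.
  by rewrite -(prednK kpos) exprS ler_piMr // ?exprn_ile1 //; lra.
apply: le_trans (ler_wpM2r Nw0 hh) _; lra.
Qed.

Lemma Tpred_deriv (p : {poly R}) m rho k : size p = k.+2 ->
  Tpred p^`() (3/2) m rho ->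
  0 < `|p^`N(1).[m]| - 3/2 * \sum_(i < k) `|p^`N(i.+2).[m]| * (i.+2)%:R * rho ^+ i.+1.
Proof.
move=> Hs; rewrite /Tpred polyorder.size_deriv Hs /= big_add1 /= big_mkord nderivn1.
congr (0 < _ - _ * _); apply: eq_bigr => i _; congr (_ * _).
rewrite -derivSn -derivnS nderivn_def hornerMn -mulr_natr factS natrM mulrA mulfK.
  by rewrite normrM normr_nat.
by rewrite pnatr_eq0 -lt0n fact_gt0.
Qed.
Arguments Tpred_deriv {p m rho k}.

Lemma est1C (p : {poly R}) (m r al : R) k (u : C) : size p = k.+2 -> root p al ->
  `|al - m| <= 2 * r ->
  `|u - m%:C| <= (2 * r)%:C ->
  exists S, (map_poly (real_complex R) p).[u] = (u - al%:C) * S /\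
  N (S - (p^`N(1).[m])%:C) <=
  \sum_(i < k) `|p^`N(i.+2).[m]| * (i.+2)%:R * (2 * r) ^+ i.+1.
Proof.
move=> Hs ra ha hu.
have ha' : `|al%:C - m%:C| <= (2 * r)%:C by rewrite -rmorphB normCR lecR.
have [S [e b]] := @taylor_est1 _ (fun i => (p^`N(i).[m])%:C) k _ _ _ ha' hu.
exists S; split.
  have e0 : (map_poly (real_complex R) p).[al%:C] = 0.
    by rewrite horner_map (rootP ra) rmorph0.
  rewrite -[LHS]subr0 -[X in _ - X]e0 !(taylorC _ m) Hs e.
  by congr (_ * _); ring.
apply: N_le; apply: le_trans b _; rewrite rmorph_sum le_eqVlt; apply/orP; left.
apply/eqP/eq_bigr => i _.
by rewrite normCR -rmorphXn -(rmorph_nat (real_complex R)) -!rmorphM.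
Qed.
Arguments est1C {p m r al k u}.

Lemma factor_main (p : {poly R}) (m r al : R) : 0 < r -> p != 0 -> `|al - m| < r ->
  root p al -> Tpred p^`() (3/2) m (8 * r) ->
  (forall z : C, `|z - m%:C| < (2 * r)%:C ->
     (map_poly (real_complex R) p).[z] = 0 -> z = al%:C) /\
  (forall z : C, `|z - m%:C| = (2 * r)%:C ->
     (2^-1) ^+ ((size p).-1.+1) * N (map_poly (real_complex R) p).[(m - 2 * r)%:C]
       < N (map_poly (real_complex R) p).[z]).
Proof.
move=> r0 p0 har ra T.
have s2 := root_size_gt1 p0 ra.
case Hs: (size p) s2 => [|[|k]] // _.
have T2 := Tpred_deriv Hs T.
set a1 := p^`N(1).[m] in T2.
set D := \sum_(i < k) _ in T2.
have h4 := sum_pow_le k (fun i => `|p^`N(i.+2).[m]| * (i.+2)%:R) r r0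
   (fun i => mulr_ge0 (normr_ge0 _) (ler0n _ _)).
rewrite -/D in h4.
set E := \sum_(i < k) _ in h4.
have E0 : 0 <= E.
  by apply: sumr_ge0 => i _; rewrite !mulr_ge0 // exprn_ge0 //; lra.
have ha : `|al - m| <= 2 * r by lra.
have key : forall u : C, `|u - m%:C| <= (2 * r)%:C ->
   exists S, (map_poly (real_complex R) p).[u] = (u - al%:C) * S /\
      `|a1| - E <= N S /\ N S <= `|a1| + E.
  move=> u hu; have [S [e b]] := est1C Hs ra ha hu.
  exists S; split => //.
  have n1 := NB3 S a1%:C; have n2 := NB2 S a1%:C; rewrite N_real in n1 n2.
  rewrite -/E in b; split; lra.
have Nam : N (al%:C - m%:C) = `|al - m| by rewrite -rmorphB N_real.
split.
  move=> z hz rz.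
  have [S [e [b1 _]]] := key z (ltW hz).
  have SN : S != 0.
    apply/eqP => S0; move: b1; rewrite S0.
    have -> : N 0 = 0 by rewrite -(rmorph0 (real_complex R)) N_real normr0.
    lra.
  move: rz; rewrite e => /eqP; rewrite mulf_eq0 (negbTE SN) orbF subr_eq0.
  by move/eqP.
move=> z hz.
have Nz : N (z - m%:C) = 2 * r by apply: complexI; rewrite -NE hz.
have hw : `|(m - 2 * r)%:C - m%:C| <= (2 * r)%:C.
  rewrite -rmorphB normCR lecR.
  have -> : m - 2 * r - m = - (2 * r) by ring.
  rewrite normrN ger0_norm //; lra.
have [Sz [ez [bz1 bz2]]] := key z (ltac:(by rewrite hz)).
have [Sw [ew [bw1 bw2]]] := key _ hw.
rewrite ez ew !NM.
have Nza : r < N (z - al%:C).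
  have := ND (z - al%:C) (al%:C - m%:C).
  have -> : z - al%:C + (al%:C - m%:C) = z - m%:C by ring.
  rewrite Nz Nam; lra.
have Nwa : N ((m - 2 * r)%:C - al%:C) < 3 * r.
  rewrite -rmorphB N_real.
  move: har; rewrite ltr_norml => /andP[h1 h2].
  rewrite ltr0_norm; lra.
have Nwa0 := N_ge0 ((m - 2 * r)%:C - al%:C).
have NSw0 := N_ge0 Sw.
rewrite /=.
case: (posnP k) => [k0|kpos].
  have eE : E = 0 by rewrite /E k0 big_ord0.
  have eD : D = 0 by rewrite /D k0 big_ord0.
  rewrite k0 expr2.
  rewrite eE in bz1 bz2 bw1 bw2.
  have a0 : 0 < `|a1| by lra.
  nra.
have hh : (2^-1 : R) ^+ k.+2 <= 8^-1.
  rewrite -(prednK kpos) !exprS mulrA mulrA.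
  have : (2^-1 : R) ^+ k.-1 <= 1 by rewrite exprn_ile1 //; lra.
  have : 0 <= (2^-1 : R) ^+ k.-1 by apply: exprn_ge0; lra.
  move: ((2^-1 : R) ^+ k.-1) => t t0 t1; nra.
have hY := mulr_ge0 Nwa0 NSw0.
apply: le_lt_trans (ler_wpM2r hY hh) _.
have a0 : 0 < `|a1| by lra.
nra.
Qed.

End Bridge.
Arguments factor_main {R p m r al}.
Arguments factor_other {R p m r}.
Arguments N {R}.

Lemma size_prod_pred (s : seq nat) (F : nat -> {poly int}) :
  (forall i, i \in s -> F i != 0) ->
  (size (\prod_(i <- s) F i)).-1 = \sum_(i <- s) (size (F i)).-1.
Proof.
elim: s => [|x s IH] H; first by rewrite !big_nil size_poly1.
rewrite !big_cons size_mul.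
- rewrite -IH; last by move=> i hi; apply: H; rewrite in_cons hi orbT.
  have h1 := H x (mem_head _ _).
  have h2 : \prod_(i <- s) F i != 0.
    by rewrite prodf_seq_neq0; apply/allP => i hi /=; apply: H; rewrite in_cons hi orbT.
  rewrite (polySpred h1) (polySpred h2) addSn /= addnS //.
- exact: H (mem_head _ _).
by rewrite prodf_seq_neq0; apply/allP => i hi /=; apply: H; rewrite in_cons hi orbT.
Qed.

Theorem lemma1 (R : realType) (P : {poly int}) (r : nat -> {poly int})
  (i0 : nat) (a b alpha : R) :
  P != 0 ->
  P = \prod_(1 <= i < size P) r i ^+ i ->
  (forall i, (1 <= i < size P)%N -> zsquarefree (r i)) ->
  (forall i j, (1 <= i < size P)%N -> (1 <= j < size P)%N -> i != j ->
     zcoprime (r i) (r j)) ->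
  (1 <= i0 < size P)%N ->
  a < alpha < b ->
  root (polyRi R (r i0)) alpha ->
  let mI := (a + b) / 2 in
  let rI := (b - a) / 2 in
  Tpred (polyRi R (r i0))^`() (3 / 2) mI (8 * rI) ->
  (forall i, (1 <= i < size P)%N -> i != i0 -> Tpred (polyRi R (r i)) 1 mI (8 * rI)) ->
  (`|alpha%:C - mI%:C| < (2 * rI)%:C /\
   forall z : R[i], root (polyCi R P) z -> `|z - mI%:C| < (2 * rI)%:C -> z = alpha%:C) /\
  (forall z : R[i], `|z - mI%:C| = (2 * rI)%:C ->
     `|(polyCi R P).[z]| >
       (2%:R ^- (i0 + (size P).-1)) * `|(polyCi R P).[(mI - 2 * rI)%:C]|).
Proof.
move=> P0 hP _ _ hi0 /andP[ha hb] ra mI rI T0 Tot.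
have r0 : 0 < rI by rewrite /rI; lra.
have hal : `|alpha - mI| < rI.
  rewrite ltr_norml /mI /rI; apply/andP; split; lra.
set s := size P in hP hi0 Tot *.
have rnz : forall i, (1 <= i < s)%N -> r i != 0.
  move=> i hi; apply/eqP => e; move/eqP: P0; apply; rewrite hP.
  rewrite (bigD1_seq i) ?mem_index_iota ?iota_uniq //= e expr0n.
  by case/andP: hi; case: i {e} => // i _ _; rewrite mul0r.
have evalP : forall u, (polyCi R P).[u] = \prod_(1 <= i < s) ((polyCi R (r i)).[u]) ^+ i.
  move=> u; rewrite {1}hP /polyCi rmorph_prod horner_prod; apply: eq_bigr => i _.
  by rewrite rmorphXn horner_exp.
have Rnz : forall i, (1 <= i < s)%N -> polyRi R (r i) != 0.
  by move=> i hi; rewrite -size_poly_eq0 size_polyRi size_poly_eq0 rnz.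
have hw : `|(mI - 2 * rI)%:C - mI%:C| <= (2 * rI)%:C.
  rewrite -rmorphB normCR lecR.
  have -> : mI - 2 * rI - mI = - (2 * rI) by ring.
  rewrite normrN ger0_norm //; lra.
have [fm1 fm2] := factor_main r0 (Rnz i0 hi0) hal ra T0.
split; first split.
- rewrite -rmorphB normCR ltcR; lra.
- move=> z /rootP rz hz.
  move: rz; rewrite evalP => /eqP; rewrite prodf_seq_eq0.
  case/hasP => i; rewrite mem_index_iota => hi /=; rewrite polyCiE.
  rewrite expf_eq0 => /andP[_ /eqP e0].
  have [ei|ne] := eqVneq i i0; first by subst i; exact: fm1.
  have [p1 _] := factor_other r0 (Rnz i hi) (Tot i hi ne) z _ (ltW hz) hw.
  move: p1; rewrite e0.
  have -> : N (0 : R[i]) = 0 by rewrite -(rmorph0 (real_complex R)) N_real normr0.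
  by rewrite ltxx.
move=> z hz.
have hzle : `|z - mI%:C| <= (2 * rI)%:C by rewrite hz.
set w := (mI - 2 * rI)%:C in hw *.
pose X i := N (map_poly (real_complex R) (polyRi R (r i))).[z].
pose Y i := N (map_poly (real_complex R) (polyRi R (r i))).[w].
have eX : `|(polyCi R P).[z]| = (\prod_(1 <= i < s) X i ^+ i)%:C.
  rewrite evalP normr_prod rmorph_prod; apply: eq_bigr => i _.
  by rewrite normrX polyCiE NE rmorphXn.
have eY : `|(polyCi R P).[w]| = (\prod_(1 <= i < s) Y i ^+ i)%:C.
  rewrite evalP normr_prod rmorph_prod; apply: eq_bigr => i _.
  by rewrite normrX polyCiE NE rmorphXn.
have e2 : (2%:R ^- (i0 + s.-1) : R[i]) = ((2^-1 : R) ^+ (i0 + s.-1))%:C.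
  by rewrite rmorphXn rmorphV ?unitfE ?pnatr_eq0 // rmorph_nat exprVn.
rewrite eX eY e2 -rmorphM ltcR.
have hdeg : s.-1 = (\sum_(1 <= i < s) (size (r i)).-1 * i)%N.
  rewrite /s {1}hP size_prod_pred; last first.
    by move=> i; rewrite mem_index_iota => hi; rewrite expf_neq0 // rnz.
  by apply: eq_bigr => i _; rewrite size_exp.
rewrite hdeg exprD -prodrXr -mulrA -big_split /=.
apply: (@prod_strict _ (fun i => (2^-1) ^+ ((size (r i)).-1 * i) * Y i ^+ i) (fun i => X i ^+ i) _ 1 s i0 hi0).
- by apply: exprn_ge0; lra.
- move=> i _; apply: mulr_ge0; apply: exprn_ge0; [lra | exact: N_ge0].
- move=> i hi ne.
  have [p1 p2] := factor_other r0 (Rnz i hi) (Tot i hi ne) z w hzle hw.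
  rewrite size_polyRi in p2.
  rewrite exprM -exprMn; apply: lerXn2r; rewrite ?nnegrE //.
  by apply: mulr_ge0; [apply: exprn_ge0; lra | exact: N_ge0].
  exact: N_ge0.
- move=> i hi ne.
  have [p1 p2] := factor_other r0 (Rnz i hi) (Tot i hi ne) z w hzle hw.
  exact: exprn_gt0.
have := fm2 z hz; rewrite size_polyRi -/w => h.
rewrite mulrA -exprD -mulSn exprM -exprMn.
rewrite ltrXn2r //.
  by case/andP: hi0; case: (i0).
by apply: mulr_ge0; [apply: exprn_ge0; lra | exact: N_ge0].
Qed.
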